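(* Let $\boldsymbol{S}\in\mathrm{Mat}(M,M,\mathbb{C})$ be invertible, $\boldsymbol{U}\in\mathrm{Mat}(m,M,\mathbb{C})$, $\boldsymbol{V}\in\mathrm{Mat}(M,m,\mathbb{C})$, $\boldsymbol{T}\in\mathrm{Mat}(M,M,\mathbb{C})$ invertible, and suppose the Sylvester equation $\boldsymbol{S}\boldsymbol{K}+\boldsymbol{K}\boldsymbol{S}=\boldsymbol{V}\boldsymbol{U}$ has a solution. Let $\boldsymbol{\Xi}=e^{-\boldsymbol{S}x-\boldsymbol{S}^{-1}y}$ with $x,y$ real, and for a solution $\boldsymbol{K}$ and $p_0\in\mathrm{Mat}(m,m,\mathbb{C})$ define $$q=\boldsymbol{U}\boldsymbol{\Xi}\,(\boldsymbol{I}_M+(\boldsymbol{K}\boldsymbol{\Xi})^2)^{-1}\boldsymbol{V},\qquad p=p_0-\boldsymbol{U}\boldsymbol{\Xi}\boldsymbol{K}\boldsymbol{\Xi}\,(\boldsymbol{I}_M+(\boldsymbol{K}\boldsymbol{\Xi})^2)^{-1}\boldsymbol{V}$$ wherever the inverse exists. (1) If $\boldsymbol{T}^\dagger=\boldsymbol{T}$, $\boldsymbol{S}^\dagger=\boldsymbol{T}\boldsymbol{S}\boldsymbol{T}^{-1}$ and $\boldsymbol{U}=\boldsymbol{V}^\dagger\boldsymbol{T}$, then the Sylvester equation has a solution $\boldsymbol{K}$ with $\boldsymbol{K}^\dagger=\boldsymbol{T}\boldsymbol{K}\boldsymbol{T}^{-1}$, and for any such $\boldsymbol{K}$ and any Hermitian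 $p_0$, the matrices $q$ and $p$ are Hermitian ($q^\dagger=q$, $p^\dagger=p$), so that they solve the Hermitian reduction of the system $p_{xy}=(q^2)_y$, $q_{xy}=q-p_yq-qp_y$. (2) If $\bar{\boldsymbol{T}}=\boldsymbol{T}^{-1}$, $\bar{\boldsymbol{S}}=\boldsymbol{T}\boldsymbol{S}\boldsymbol{T}^{-1}$, $\bar{\boldsymbol{U}}=\boldsymbol{U}\boldsymbol{T}^{-1}$ and $\bar{\boldsymbol{V}}=\boldsymbol{T}\boldsymbol{V}$, then the Sylvester equation has a solution $\boldsymbol{K}$ with $\bar{\boldsymbol{K}}=\boldsymbol{T}\boldsymbol{K}\boldsymbol{T}^{-1}$, and for any such $\boldsymbol{K}$ and any real $p_0$ ($\bar p_0=p_0$), one has $\bar q=q$ and $\bar p=p$, so that $q,p$ solve the complex conjugation (real) reduction of the system $p_{xy}=(q^2)_y$, $q_{xy}=q-p_yq-qp_y$.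
   Context: ${}^\dagger$ denotes the conjugate transpose and a bar denotes entrywise complex conjugation; $\boldsymbol{I}_M$ is the $M\times M$ identity matrix; $e^{(\cdot)}$ is the matrix exponential; subscripts denote partial derivatives. *)

(* Defs.v *)
From Stdlib Require Import Reals Arith Factorial.
Open Scope R_scope.

Record C := mkC { Cre : R; Cim : R }.
Definition C0 : C := mkC 0 0.
Definition C1 : C := mkC 1 0.
Definition RtoC (r : R) : C := mkC r 0.
Definition Cadd (a b : C) : C := mkC (Cre a + Cre b) (Cim a + Cim b).
Definition Copp (a : C) : C := mkC (- Cre a) (- Cim a).
Definition Cmul (a b : C) : C :=
  mkC (Cre a * Cre b - Cim a * Cim b) (Cre a * Cim b + Cim a * Cre b).
Definition Cconj (a : C) : C := mkC (Cre a) (- Cim a).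

Fixpoint Csum (n : nat) (f : nat -> C) : C :=
  match n with
  | O => C0
  | S k => Cadd (Csum k f) (f k)
  end.

(** Matrices: entry (i,j); only entries with i < rows, j < cols are meaningful. *)
Definition Mat := nat -> nat -> C.

Definition meq (r c : nat) (A B : Mat) : Prop :=
  forall i j, (i < r)%nat -> (j < c)%nat -> A i j = B i j.

Definition mmul (n : nat) (A B : Mat) : Mat :=
  fun i j => Csum n (fun k => Cmul (A i k) (B k j)).
Definition madd (A B : Mat) : Mat := fun i j => Cadd (A i j) (B i j).
Definition mopp (A : Mat) : Mat := fun i j => Copp (A i j).
Definition msub (A B : Mat) : Mat := madd A (mopp B).
Definition mscaleR (r : R) (A : Mat) : Mat := fun i j => Cmul (RtoC r) (A i j).
Definition mid : Mat := fun i j => if Nat.eqb i j then C1 else C0.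
Definition adj (A : Mat) : Mat := fun i j => Cconj (A j i).
Definition mconj (A : Mat) : Mat := fun i j => Cconj (A i j).

Definition is_inverse (n : nat) (A B : Mat) : Prop :=
  meq n n (mmul n A B) mid /\ meq n n (mmul n B A) mid.

Fixpoint mpow (n : nat) (A : Mat) (k : nat) : Mat :=
  match k with
  | O => mid
  | S k' => mmul n (mpow n A k') A
  end.
Fixpoint exp_partial (n : nat) (A : Mat) (N : nat) : Mat :=
  match N with
  | O => mid
  | S N' => madd (exp_partial n A N')
                 (mscaleR (/ INR (fact N)) (mpow n A N))
  end.
Definition is_mexp (n : nat) (A E : Mat) : Prop :=
  forall i j, (i < n)%nat -> (j < n)%nat ->
    Un_cv (fun N => Cre (exp_partial n A N i j)) (Cre (E i j)) /\
    Un_cv (fun N => Cim (exp_partial n A N i j)) (Cim (E i j)).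

Definition sylvester (M m : nat) (S U V K : Mat) : Prop :=
  meq M M (madd (mmul M S K) (mmul M K S)) (mmul m V U).

(** q = U Xi W V and p = p0 - U Xi K Xi W V, where W = (I_M + (K Xi)^2)^{-1} *)
Definition qmat (M : nat) (U V Xi W : Mat) : Mat :=
  mmul M (mmul M (mmul M U Xi) W) V.
Definition pmat (M : nat) (p0 U V K Xi W : Mat) : Mat :=
  msub p0 (mmul M (mmul M (mmul M (mmul M (mmul M U Xi) K) Xi) W) V).

Definition Xi_arg (S Sinv : Mat) (x y : R) : Mat :=
  msub (mopp (mscaleR x S)) (mscaleR y Sinv).
Definition denom (M : nat) (K Xi : Mat) : Mat :=
  madd mid (mmul M (mmul M K Xi) (mmul M K Xi)).

(* Main.v *)
From Stdlib Require Import Reals Lra Lia Factorial.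
Require Import Defs.
Open Scope R_scope.

Definition Ccv (u : nat -> Defs.C) (l : Defs.C) : Prop :=
  Un_cv (fun N => Cre (u N)) (Cre l) /\ Un_cv (fun N => Cim (u N)) (Cim l).

Lemma cv_const c : Un_cv (fun _ => c) c.
Proof. intros e he. exists 0%nat. intros n _. rewrite R_dist_eq. lra. Qed.

Lemma cv_ext u v l : (forall N, u N = v N) -> Un_cv u l -> Un_cv v l.
Proof. intros H H0 e he. destruct (H0 e he) as [N0 HN]. exists N0. intros n hn. rewrite <- H. auto. Qed.

Lemma Ccv_ext u v l : (forall N, u N = v N) -> Ccv u l -> Ccv v l.
Proof. intros H [H1 H2]. split; eapply cv_ext; try eassumption; intros N; simpl; rewrite H; reflexivity. Qed.

Lemma Ccv_add u v a b : Ccv u a -> Ccv v b -> Ccv (fun N => Cadd (u N) (v N)) (Cadd a b).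
Proof. intros [H1 H2] [H3 H4]. split; simpl; apply CV_plus; auto. Qed.

Lemma Ccv_mull a u l : Ccv u l -> Ccv (fun N => Cmul a (u N)) (Cmul a l).
Proof. intros [H1 H2]. split; simpl.
- apply CV_minus; apply CV_mult; auto; apply cv_const.
- apply CV_plus; apply CV_mult; auto; apply cv_const.
Qed.

Lemma Ccv_mulr a u l : Ccv u l -> Ccv (fun N => Cmul (u N) a) (Cmul l a).
Proof. intros [H1 H2]. split; simpl.
- apply CV_minus; apply CV_mult; auto; apply cv_const.
- apply CV_plus; apply CV_mult; auto; apply cv_const.
Qed.

Lemma Ccv_conj u l : Ccv u l -> Ccv (fun N => Cconj (u N)) (Cconj l).
Proof. intros [H1 H2]. split; simpl; auto. apply CV_opp; auto. Qed.

Lemma Ccv_sum n f l : (forall k, (k < n)%nat -> Ccv (fun N => f N k) (l k)) ->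
  Ccv (fun N => Csum n (f N)) (Csum n l).
Proof. induction n as [|n IH]; intros H; simpl.
- split; apply cv_const.
- apply Ccv_add. apply IH; intros; apply H; lia. apply H; lia.
Qed.

Lemma Ccv_unique u a b : Ccv u a -> Ccv u b -> a = b.
Proof. intros [H1 H2] [H3 H4]. destruct a, b. simpl in *.
f_equal; eapply UL_sequence; eassumption. Qed.


Lemma exp_adj_lim n A E T Ti :
  (forall N, meq n n (adj (exp_partial n A N)) (mmul n (mmul n T (exp_partial n A N)) Ti)) ->
  is_mexp n A E -> meq n n (adj E) (mmul n (mmul n T E) Ti).
Proof.
intros H HE i j hi hj.
apply Ccv_unique with (u := fun N => adj (exp_partial n A N) i j).
- unfold adj. apply Ccv_conj. split; apply HE; auto.
- apply Ccv_ext with (u := fun N => mmul n (mmul n T (exp_partial n A N)) Ti i j).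
  { intros N. symmetry. apply H; auto. }
  unfold mmul. apply Ccv_sum; intros l hl. apply Ccv_mulr. apply Ccv_sum; intros k hk.
  apply Ccv_mull. split; apply HE; auto.
Qed.

Lemma exp_conj_lim n A E T Ti :
  (forall N, meq n n (mconj (exp_partial n A N)) (mmul n (mmul n T (exp_partial n A N)) Ti)) ->
  is_mexp n A E -> meq n n (mconj E) (mmul n (mmul n T E) Ti).
Proof.
intros H HE i j hi hj.
apply Ccv_unique with (u := fun N => mconj (exp_partial n A N) i j).
- unfold mconj. apply Ccv_conj. split; apply HE; auto.
- apply Ccv_ext with (u := fun N => mmul n (mmul n T (exp_partial n A N)) Ti i j).
  { intros N. symmetry. apply H; auto. }
  unfold mmul. apply Ccv_sum; intros l hl. apply Ccv_mulr. apply Ccv_sum; intros k hk.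
  apply Ccv_mull. split; apply HE; auto.
Qed.

From mathcomp Require Import all_boot all_algebra.
From mathcomp Require Import complex.
From mathcomp Require Import Rstruct.
Require Import Defs.
Import GRing.Theory Num.Theory.
Set Implicit Arguments. Unset Strict Implicit. Unset Printing Implicit Defensive.
Local Open Scope ring_scope.

Definition toC (z : Defs.C) : R[i] := (Cre z +i* Cim z)%C.
Lemma toC_add a b : toC (Cadd a b) = toC a + toC b.
Proof. by case: a; case: b. Qed.
Lemma toC_mul a b : toC (Cmul a b) = toC a * toC b.
Proof. by case: a; case: b. Qed.
Lemma toC_opp a : toC (Copp a) = - toC a.
Proof. by case: a. Qed.
Lemma toC_conj a : toC (Cconj a) = (toC a)^*%C.
Proof. by case: a. Qed.
Lemma toC0 : toC C0 = 0. Proof. by []. Qed.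
Lemma toC1 : toC C1 = 1. Proof. by []. Qed.
Lemma toC_R r : toC (RtoC r) = r%:C%C. Proof. by []. Qed.
Lemma toC_inj a b : toC a = toC b -> a = b.
Proof. by case: a; case: b => ? ? ? ? [-> ->]. Qed.

Lemma toC_sum n f : toC (Csum n f) = \sum_(k < n) toC (f k).
Proof. elim: n => [|n IH] /=; first by rewrite big_ord0. by rewrite toC_add IH big_ord_recr. Qed.

Definition toM (r c : nat) (A : Mat) : 'M[R[i]]_(r, c) := \matrix_(i < r, j < c) toC (A i j).

Lemma meqE r c A B : meq r c A B <-> toM r c A = toM r c B.
Proof.
split.
- move=> H; apply/matrixP => i j; rewrite !mxE H //; apply/ltP; exact: ltn_ord.
- move=> H i j /ltP hi /ltP hj.
  have := congr1 (fun X : 'M_(r,c) => X (Ordinal hi) (Ordinal hj)) H.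
  rewrite !mxE /=; exact: toC_inj.
Qed.

Lemma toM_mul r n c A B : toM r c (mmul n A B) = toM r n A *m toM n c B.
Proof. apply/matrixP => i j; rewrite !mxE /mmul toC_sum; apply: eq_bigr => k _; by rewrite toC_mul !mxE. Qed.
Lemma toM_add r c A B : toM r c (madd A B) = toM r c A + toM r c B.
Proof. apply/matrixP => i j; by rewrite !mxE toC_add. Qed.
Lemma toM_opp r c A : toM r c (mopp A) = - toM r c A.
Proof. apply/matrixP => i j; by rewrite !mxE toC_opp. Qed.
Lemma toM_sub r c A B : toM r c (msub A B) = toM r c A - toM r c B.
Proof. by rewrite /msub toM_add toM_opp. Qed.
Lemma toM_scale r c x A : toM r c (mscaleR x A) = (x%:C)%C *: toM r c A.
Proof. apply/matrixP => i j; by rewrite !mxE toC_mul toC_R. Qed.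
Lemma toM_mid n : toM n n mid = 1%:M.
Proof. apply/matrixP => i j; rewrite !mxE /mid.
case: (Nat.eqb_spec i j) => [/val_inj -> | h]; first by rewrite eqxx.
by rewrite (introF eqP) //; move=> e; apply: h; rewrite e.
Qed.
Lemma conjcMR (x:R) (z : R[i]) : (x%:C * z)^*%C = x%:C%C * z^*%C.
Proof. case: z => a b; rewrite /= !mul0r !subr0 !addr0.
rewrite /GRing.mul /= !mul0r subr0 addr0 mulrN. by []. Qed.

Definition adjm r c (A : 'M[R[i]]_(r, c)) : 'M[R[i]]_(c, r) := (map_mx conjc A)^T.
Lemma toM_adj r c A : toM r c (adj A) = adjm (toM c r A).
Proof. apply/matrixP => i j; by rewrite !mxE toC_conj. Qed.
Lemma toM_conj r c A : toM r c (mconj A) = map_mx conjc (toM r c A).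
Proof. apply/matrixP => i j; by rewrite !mxE toC_conj. Qed.

Fixpoint mxpow n (X : 'M[R[i]]_n) k : 'M[R[i]]_n :=
  match k with O => 1%:M | S k => mxpow X k *m X end.
Lemma toM_pow n A k : toM n n (mpow n A k) = mxpow (toM n n A) k.
Proof. elim: k => [|k IH] /=; by rewrite ?toM_mid // toM_mul IH. Qed.

Lemma adjmM r n c (A : 'M[R[i]]_(r, n)) (B : 'M[R[i]]_(n, c)) : adjm (A *m B) = adjm B *m adjm A.
Proof. by rewrite /adjm map_mxM trmx_mul. Qed.
Lemma adjmD r c (A B : 'M[R[i]]_(r, c)) : adjm (A + B) = adjm A + adjm B.
Proof. by rewrite /adjm map_mxD linearD. Qed.
Lemma adjmN r c (A : 'M[R[i]]_(r, c)) : adjm (- A) = - adjm A.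
Proof. by rewrite /adjm map_mxN linearN. Qed.
Lemma adjmB r c (A B : 'M[R[i]]_(r, c)) : adjm (A - B) = adjm A - adjm B.
Proof. by rewrite adjmD adjmN. Qed.
Lemma adjm1 n : adjm (1%:M : 'M[R[i]]_n) = 1%:M.
Proof. by rewrite /adjm map_mx1 trmx1. Qed.
Lemma adjmK r c (A : 'M[R[i]]_(r, c)) : adjm (adjm A) = A.
Proof. apply/matrixP => i j; by rewrite !mxE conjcK. Qed.
Lemma adjmZ r c (x : R) (A : 'M[R[i]]_(r, c)) : adjm ((x%:C)%C *: A) = (x%:C)%C *: adjm A.
Proof. apply/matrixP => i j; by rewrite !mxE conjcMR. Qed.
Lemma cjM r n c (A : 'M[R[i]]_(r, n)) (B : 'M[R[i]]_(n, c)) : map_mx conjc (A *m B) = map_mx conjc A *m map_mx conjc B.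
Proof. by rewrite map_mxM. Qed.
Lemma cjZ r c (x : R) (A : 'M[R[i]]_(r, c)) : map_mx conjc ((x%:C)%C *: A) = (x%:C)%C *: map_mx conjc A.
Proof. apply/matrixP => i j; by rewrite !mxE conjcMR. Qed.
Lemma cjK r c (A : 'M[R[i]]_(r, c)) : map_mx conjc (map_mx conjc A) = A.
Proof. apply/matrixP => i j; by rewrite !mxE conjcK. Qed.

Section Alg.
Local Notation cj := (map_mx conjc).

Lemma mxpow_comm n (X : 'M[R[i]]_n) k : mxpow X k *m X = X *m mxpow X k.
Proof. elim: k => [|k IH] /=; first by rewrite mul1mx mulmx1. by rewrite {1}IH -mulmxA. Qed.

Lemma adjm_pow n (X : 'M[R[i]]_n) k : adjm (mxpow X k) = mxpow (adjm X) k.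
Proof. elim: k => [|k IH] /=; first by rewrite adjm1. by rewrite adjmM IH mxpow_comm. Qed.

Lemma cj_pow n (X : 'M[R[i]]_n) k : cj (mxpow X k) = mxpow (cj X) k.
Proof. elim: k => [|k IH] /=; first by rewrite map_mx1. by rewrite map_mxM IH. Qed.

Lemma sim_pow n (T Ti X : 'M[R[i]]_n) k : Ti *m T = 1%:M -> T *m Ti = 1%:M ->
  T *m mxpow X k *m Ti = mxpow (T *m X *m Ti) k.
Proof. move=> h1 h2; elim: k => [|k IH] /=; first by rewrite mulmx1.
by rewrite -IH !mulmxA -(mulmxA _ Ti T) h1 mulmx1. Qed.

Lemma intertw n (A B A' B' Y : 'M[R[i]]_n) : A *m B = 1%:M -> B' *m A' = 1%:M ->
  A' *m Y = Y *m A -> B' *m Y = Y *m B.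
Proof. move=> h1 h2 h3.
have -> : B' *m Y = B' *m Y *m (A *m B) by rewrite h1 mulmx1.
by rewrite !mulmxA -(mulmxA B') -h3 mulmxA h2 mul1mx. Qed.

End Alg.


Lemma toM_exp n A N : toM n n (exp_partial n A N.+1) =
  toM n n (exp_partial n A N) + (((/ INR (Factorial.fact N.+1))%R)%:C)%C *: mxpow (toM n n A) N.+1.
Proof. have -> : exp_partial n A N.+1 = madd (exp_partial n A N) (mscaleR (/ INR (Factorial.fact N.+1)) (mpow n A N.+1)) by []. by rewrite toM_add toM_scale toM_pow. Qed.

Lemma exp_adj n A E T Ti : meq n n (mmul n Ti T) mid -> meq n n (mmul n T Ti) mid ->
  meq n n (adj A) (mmul n (mmul n T A) Ti) -> is_mexp n A E ->
  meq n n (adj E) (mmul n (mmul n T E) Ti).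
Proof.
move=> /meqE h1 /meqE h2 /meqE h3; apply: exp_adj_lim => N; apply/meqE.
move: h1 h2 h3; rewrite !toM_mul !toM_mid !toM_adj => h1 h2 h3.
elim: N => [|N IH]; first by rewrite (_ : exp_partial n A 0 = mid) // toM_mid adjm1 mulmx1 h2.
rewrite toM_exp adjmD adjmZ IH adjm_pow h3 -sim_pow //.
by rewrite mulmxDr mulmxDl -!scalemxAr -!scalemxAl.
Qed.

Lemma exp_cj n A E T Ti : meq n n (mmul n Ti T) mid -> meq n n (mmul n T Ti) mid ->
  meq n n (mconj A) (mmul n (mmul n T A) Ti) -> is_mexp n A E ->
  meq n n (mconj E) (mmul n (mmul n T E) Ti).
Proof.
move=> /meqE h1 /meqE h2 /meqE h3; apply: exp_conj_lim => N; apply/meqE.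
move: h1 h2 h3; rewrite !toM_mul !toM_mid !toM_conj => h1 h2 h3.
elim: N => [|N IH]; first by rewrite (_ : exp_partial n A 0 = mid) // toM_mid map_mx1 mulmx1 h2.
rewrite toM_exp map_mxD cjZ IH cj_pow h3 -sim_pow //.
by rewrite mulmxDr mulmxDl -!scalemxAr -!scalemxAl.
Qed.


Lemma core1 m M (T Ti K X W : 'M[R[i]]_M) (U : 'M_(m,M)) (V : 'M_(M,m)) (P0 : 'M_m) :
  Ti *m T = 1%:M -> T *m Ti = 1%:M -> adjm T = T -> U = adjm V *m T ->
  adjm K = T *m K *m Ti -> adjm X = T *m X *m Ti ->
  (1%:M + (K *m X) *m (K *m X)) *m W = 1%:M -> W *m (1%:M + (K *m X) *m (K *m X)) = 1%:M ->
  adjm P0 = P0 ->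
  adjm (U *m X *m W *m V) = U *m X *m W *m V /\
  adjm (P0 - U *m X *m K *m X *m W *m V) = P0 - U *m X *m K *m X *m W *m V.
Proof.
move=> h1 h2 hT hU hK hX hD1 hD2 hP.
have c1 : forall r (Z : 'M_(r, M)), Z *m Ti *m T = Z by move=> r Z; rewrite -mulmxA h1 mulmx1.
set D : 'M[R[i]]_M := 1%:M + K *m X *m (K *m X).
have hJD : adjm D = 1%:M + T *m X *m K *m X *m K *m Ti.
  by rewrite /D adjmD adjm1 !adjmM hK hX !mulmxA !c1.
have hJW : adjm W *m adjm D = 1%:M by rewrite -adjmM hD1 adjm1.
have k1 : adjm W *m (T *m X) = T *m X *m W.
  apply: (intertw hD1 hJW).
  by rewrite hJD /D mulmxDl mulmxDr mul1mx mulmx1 !mulmxA !c1.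
have k2 : adjm W *m (T *m X *m K *m X) = T *m X *m K *m X *m W.
  apply: (intertw hD1 hJW).
  by rewrite hJD /D mulmxDl mulmxDr mul1mx mulmx1 !mulmxA !c1.
have hJU : adjm U = T *m V by rewrite hU adjmM hT adjmK.
have k1' : forall r (Z : 'M_(r, M)), Z *m adjm W *m T *m X = Z *m T *m X *m W.
  by move=> r Z; rewrite -!mulmxA k1 !mulmxA.
have k2' : forall r (Z : 'M_(r, M)), Z *m adjm W *m T *m X *m K *m X = Z *m T *m X *m K *m X *m W.
  move=> r Z; have -> : Z *m adjm W *m T *m X *m K *m X = Z *m (adjm W *m (T *m X *m K *m X)) by rewrite !mulmxA.
  by rewrite k2 !mulmxA.
split.
- rewrite !adjmM hJU hX hU !mulmxA c1 k1'. by [].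
- rewrite adjmB hP !adjmM hJU hX hK hU !mulmxA !c1 k2'. by [].
Qed.

Local Notation cj := (map_mx conjc).

Lemma core2 m M (T Ti K X W : 'M[R[i]]_M) (U : 'M_(m,M)) (V : 'M_(M,m)) (P0 : 'M_m) :
  Ti *m T = 1%:M -> T *m Ti = 1%:M -> cj T = Ti -> cj U = U *m Ti -> cj V = T *m V ->
  cj K = T *m K *m Ti -> cj X = T *m X *m Ti ->
  (1%:M + (K *m X) *m (K *m X)) *m W = 1%:M -> W *m (1%:M + (K *m X) *m (K *m X)) = 1%:M ->
  cj P0 = P0 ->
  cj (U *m X *m W *m V) = U *m X *m W *m V /\
  cj (P0 - U *m X *m K *m X *m W *m V) = P0 - U *m X *m K *m X *m W *m V.
Proof.
move=> h1 h2 hT hU hV hK hX hD1 hD2 hP.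
have c1 : forall r (Z : 'M_(r, M)), Z *m Ti *m T = Z by move=> r Z; rewrite -mulmxA h1 mulmx1.
set D : 'M[R[i]]_M := 1%:M + K *m X *m (K *m X).
have hJD : cj D = 1%:M + T *m K *m X *m K *m X *m Ti.
  by rewrite /D map_mxD map_mx1 !map_mxM hK hX !mulmxA !c1.
have hJW : cj W *m cj D = 1%:M by rewrite -map_mxM hD2 map_mx1.
have k1 : cj W *m T = T *m W.
  apply: (intertw hD1 hJW).
  by rewrite hJD /D mulmxDl mulmxDr mul1mx mulmx1 !mulmxA !c1.
have k1' : forall r (Z : 'M_(r, M)), Z *m cj W *m T = Z *m T *m W.
  by move=> r Z; rewrite -!mulmxA k1.
split.
- rewrite !map_mxM hU hV hX !mulmxA c1 k1' c1. by [].
- rewrite map_mxB hP !map_mxM hU hV hX hK !mulmxA !c1 k1' c1. by [].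
Qed.

Lemma half_C : (((/2)%R)%:C + ((/2)%R)%:C = 1 :> R[i])%C.
Proof. apply/eqP; rewrite eq_complex /= addr0 eqxx andbT; apply/eqP.
change (Rplus (/2) (/2) = R1). lra. Qed.

Lemma ex1 m M (S T Ti K0 : 'M[R[i]]_M) (U : 'M_(m,M)) (V : 'M_(M,m)) :
  Ti *m T = 1%:M -> T *m Ti = 1%:M -> adjm T = T -> adjm S = T *m S *m Ti ->
  U = adjm V *m T -> S *m K0 + K0 *m S = V *m U ->
  let K := (((/2)%R)%:C)%C *: (K0 + Ti *m adjm K0 *m T) in
  S *m K + K *m S = V *m U /\ adjm K = T *m K *m Ti.
Proof.
move=> h1 h2 hT hS hU hK0 K.
have c1 : forall r (Z : 'M_(r, M)), Z *m Ti *m T = Z by move=> r Z; rewrite -mulmxA h1 mulmx1.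
have c2 : forall r (Z : 'M_(r, M)), Z *m T *m Ti = Z by move=> r Z; rewrite -mulmxA h2 mulmx1.
have E1 : S *m Ti = Ti *m adjm S by rewrite hS !mulmxA h1 mul1mx.
have E2 : T *m S = adjm S *m T by rewrite hS c1.
have hJTi : adjm Ti = Ti.
  have e : T *m adjm Ti = 1%:M by rewrite -hT -adjmM h1 adjm1.
  by rewrite -[adjm Ti]mul1mx -h1 -mulmxA e mulmx1.
have s1 : S *m (Ti *m adjm K0 *m T) + (Ti *m adjm K0 *m T) *m S = V *m U.
  have -> : S *m (Ti *m adjm K0 *m T) = Ti *m (adjm S *m adjm K0) *m T by rewrite !mulmxA E1.
  have -> : (Ti *m adjm K0 *m T) *m S = Ti *m (adjm K0 *m adjm S) *m T by rewrite -!mulmxA E2.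
  rewrite -mulmxDl -mulmxDr -!adjmM -adjmD addrC hK0 adjmM hU adjmM adjmK hT.
  by rewrite !mulmxA h1 mul1mx.
split.
- rewrite /K -scalemxAr -scalemxAl -scalerDr mulmxDr mulmxDl addrACA hK0 s1.
  by rewrite scalerDr -scalerDl half_C scale1r.
- rewrite /K adjmZ adjmD !adjmM adjmK hJTi hT -scalemxAr -scalemxAl; congr (_ *: _).
  by rewrite mulmxDr mulmxDl !mulmxA h2 mul1mx c2 addrC.
Qed.

Lemma ex2 m M (S T Ti K0 : 'M[R[i]]_M) (U : 'M_(m,M)) (V : 'M_(M,m)) :
  Ti *m T = 1%:M -> T *m Ti = 1%:M -> cj T = Ti -> cj S = T *m S *m Ti ->
  cj U = U *m Ti -> cj V = T *m V -> S *m K0 + K0 *m S = V *m U ->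
  let K := (((/2)%R)%:C)%C *: (K0 + Ti *m cj K0 *m T) in
  S *m K + K *m S = V *m U /\ cj K = T *m K *m Ti.
Proof.
move=> h1 h2 hT hS hU hV hK0 K.
have c1 : forall r (Z : 'M_(r, M)), Z *m Ti *m T = Z by move=> r Z; rewrite -mulmxA h1 mulmx1.
have c2 : forall r (Z : 'M_(r, M)), Z *m T *m Ti = Z by move=> r Z; rewrite -mulmxA h2 mulmx1.
have E1 : S *m Ti = Ti *m cj S by rewrite hS !mulmxA h1 mul1mx.
have E2 : T *m S = cj S *m T by rewrite hS c1.
have hJTi : cj Ti = T.
  have e : Ti *m cj Ti = 1%:M by rewrite -{1}hT -map_mxM h2 map_mx1.
  by rewrite -[cj Ti]mul1mx -h2 -mulmxA e mulmx1.
have s1 : S *m (Ti *m cj K0 *m T) + (Ti *m cj K0 *m T) *m S = V *m U.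
  have -> : S *m (Ti *m cj K0 *m T) = Ti *m (cj S *m cj K0) *m T by rewrite !mulmxA E1.
  have -> : (Ti *m cj K0 *m T) *m S = Ti *m (cj K0 *m cj S) *m T by rewrite -!mulmxA E2.
  rewrite -mulmxDl -mulmxDr -!map_mxM -map_mxD hK0 map_mxM hU hV.
  by rewrite !mulmxA h1 mul1mx c1.
split.
- rewrite /K -scalemxAr -scalemxAl -scalerDr mulmxDr mulmxDl addrACA hK0 s1.
  by rewrite scalerDr -scalerDl half_C scale1r.
- rewrite /K cjZ map_mxD !map_mxM cjK hJTi hT -scalemxAr -scalemxAl; congr (_ *: _).
  by rewrite mulmxDr mulmxDl !mulmxA h2 mul1mx c2 addrC.
Qed.

Lemma inv_adj M (S Si T Ti : 'M[R[i]]_M) :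
  Ti *m T = 1%:M -> T *m Ti = 1%:M -> S *m Si = 1%:M -> Si *m S = 1%:M ->
  adjm S = T *m S *m Ti -> adjm Si = T *m Si *m Ti.
Proof.
move=> h1 h2 h3 h4 hS.
have e1 : adjm Si *m adjm S = 1%:M by rewrite -adjmM h3 adjm1.
have e2 : adjm S *m (T *m Si *m Ti) = 1%:M.
  by rewrite hS !mulmxA -(mulmxA _ Ti T) h1 mulmx1 -(mulmxA _ S Si) h3 mulmx1 h2.
by rewrite -[adjm Si]mulmx1 -e2 mulmxA e1 mul1mx.
Qed.

Lemma inv_cj M (S Si T Ti : 'M[R[i]]_M) :
  Ti *m T = 1%:M -> T *m Ti = 1%:M -> S *m Si = 1%:M -> Si *m S = 1%:M ->
  cj S = T *m S *m Ti -> cj Si = T *m Si *m Ti.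
Proof.
move=> h1 h2 h3 h4 hS.
have e1 : cj Si *m cj S = 1%:M by rewrite -map_mxM h4 map_mx1.
have e2 : cj S *m (T *m Si *m Ti) = 1%:M.
  by rewrite hS !mulmxA -(mulmxA _ Ti T) h1 mulmx1 -(mulmxA _ S Si) h3 mulmx1 h2.
by rewrite -[cj Si]mulmx1 -e2 mulmxA e1 mul1mx.
Qed.


Lemma inv_toM n A B : meq n n (mmul n A B) mid -> toM n n A *m toM n n B = 1%:M.
Proof. by move/meqE; rewrite toM_mul toM_mid. Qed.

Lemma denom_toM M K Xi W : meq M M (mmul M (denom M K Xi) W) mid ->
  (1%:M + (toM M M K *m toM M M Xi) *m (toM M M K *m toM M M Xi)) *m toM M M W = 1%:M.
Proof. by move/meqE; rewrite /denom !toM_mul toM_add toM_mid !toM_mul. Qed.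
Lemma denom_toM' M K Xi W : meq M M (mmul M W (denom M K Xi)) mid ->
  toM M M W *m (1%:M + (toM M M K *m toM M M Xi) *m (toM M M K *m toM M M Xi)) = 1%:M.
Proof. by move/meqE; rewrite /denom !toM_mul toM_add toM_mid !toM_mul. Qed.

Local Open Scope R_scope.
Theorem proposition2 (m M : nat) (S U V T Sinv Tinv : Mat) :
  is_inverse M S Sinv ->
  is_inverse M T Tinv ->
  (exists K0, sylvester M m S U V K0) ->
  (* (1) Hermitian reduction *)
  ( (meq M M (adj T) T /\
     meq M M (adj S) (mmul M (mmul M T S) Tinv) /\
     meq m M U (mmul M (adj V) T)) ->
    (exists K, sylvester M m S U V K /\
               meq M M (adj K) (mmul M (mmul M T K) Tinv)) /\
    (forall (K p0 : Mat),
       sylvester M m S U V K ->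
       meq M M (adj K) (mmul M (mmul M T K) Tinv) ->
       meq m m (adj p0) p0 ->
       forall (x y : R) (Xi W : Mat),
         is_mexp M (Xi_arg S Sinv x y) Xi ->
         is_inverse M (denom M K Xi) W ->
         meq m m (adj (qmat M U V Xi W)) (qmat M U V Xi W) /\
         meq m m (adj (pmat M p0 U V K Xi W)) (pmat M p0 U V K Xi W)) ) /\
  (* (2) complex conjugation (real) reduction *)
  ( (meq M M (mconj T) Tinv /\
     meq M M (mconj S) (mmul M (mmul M T S) Tinv) /\
     meq m M (mconj U) (mmul M U Tinv) /\
     meq M m (mconj V) (mmul M T V)) ->
    (exists K, sylvester M m S U V K /\
               meq M M (mconj K) (mmul M (mmul M T K) Tinv)) /\
    (forall (K p0 : Mat),
       sylvester M m S U V K ->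
       meq M M (mconj K) (mmul M (mmul M T K) Tinv) ->
       meq m m (mconj p0) p0 ->
       forall (x y : R) (Xi W : Mat),
         is_mexp M (Xi_arg S Sinv x y) Xi ->
         is_inverse M (denom M K Xi) W ->
         meq m m (mconj (qmat M U V Xi W)) (qmat M U V Xi W) /\
         meq m m (mconj (pmat M p0 U V K Xi W)) (pmat M p0 U V K Xi W)) ).
Proof.
move=> [HS1 HS2] [HT1 HT2] [K0 HK0].
have hS1 := inv_toM HS1; have hS2 := inv_toM HS2.
have hT1 := inv_toM HT1; have hT2 := inv_toM HT2.
move/meqE: HK0; rewrite toM_add !toM_mul => hK0.
split.
- move=> [/meqE HTa [/meqE HSa /meqE HUa]].
  move: HTa HSa HUa; rewrite !toM_adj !toM_mul toM_adj => hTa hSa hUa.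
  have hSi := inv_adj hT2 hT1 hS1 hS2 hSa.
  split.
  + exists (mscaleR (/2) (madd K0 (mmul M (mmul M Tinv (adj K0)) T))).
    have [e1 e2] := ex1 hT2 hT1 hTa hSa hUa hK0.
    split; apply/meqE.
    * by rewrite toM_add !toM_mul toM_scale toM_add !toM_mul toM_adj.
    * by rewrite toM_adj !toM_mul toM_scale toM_add !toM_mul toM_adj.
  + move=> K p0 /meqE HK /meqE HKa /meqE Hp0 x y Xi W HXi [HW1 HW2].
    move: HK HKa Hp0; rewrite ?toM_add ?toM_mul ?toM_adj ?toM_mul => hK hKa hp0.
    have HA : meq M M (adj (Xi_arg S Sinv x y)) (mmul M (mmul M T (Xi_arg S Sinv x y)) Tinv).
      apply/meqE; rewrite toM_adj !toM_mul /Xi_arg toM_sub toM_opp !toM_scale.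
      rewrite adjmB adjmN !adjmZ hSa hSi.
      by rewrite mulmxBr mulmxBl mulmxN mulNmx -!scalemxAr -!scalemxAl.
    have /meqE := exp_adj HT2 HT1 HA HXi.
    rewrite toM_adj !toM_mul => hX.
    have [q1 q2] := core1 hT2 hT1 hTa hUa hKa hX (denom_toM HW1) (denom_toM' HW2) hp0.
    split; apply/meqE.
    * by rewrite /qmat toM_adj !toM_mul.
    * by rewrite /pmat toM_adj !toM_sub !toM_mul.
- move=> [/meqE HTa [/meqE HSa [/meqE HUa /meqE HVa]]].
  move: HTa HSa HUa HVa; rewrite !toM_conj !toM_mul => hTa hSa hUa hVa.
  have hSi := inv_cj hT2 hT1 hS1 hS2 hSa.
  split.
  + exists (mscaleR (/2) (madd K0 (mmul M (mmul M Tinv (mconj K0)) T))).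
    have [e1 e2] := ex2 hT2 hT1 hTa hSa hUa hVa hK0.
    split; apply/meqE.
    * by rewrite toM_add !toM_mul toM_scale toM_add !toM_mul toM_conj.
    * by rewrite toM_conj !toM_mul toM_scale toM_add !toM_mul toM_conj.
  + move=> K p0 /meqE HK /meqE HKa /meqE Hp0 x y Xi W HXi [HW1 HW2].
    move: HK HKa Hp0; rewrite ?toM_add ?toM_mul ?toM_conj ?toM_mul => hK hKa hp0.
    have HA : meq M M (mconj (Xi_arg S Sinv x y)) (mmul M (mmul M T (Xi_arg S Sinv x y)) Tinv).
      apply/meqE; rewrite toM_conj !toM_mul /Xi_arg toM_sub toM_opp !toM_scale.
      rewrite map_mxB map_mxN !cjZ hSa hSi.
      by rewrite mulmxBr mulmxBl mulmxN mulNmx -!scalemxAr -!scalemxAl.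
    have /meqE := exp_cj HT2 HT1 HA HXi.
    rewrite toM_conj !toM_mul => hX.
    have [q1 q2] := core2 hT2 hT1 hTa hUa hVa hKa hX (denom_toM HW1) (denom_toM' HW2) hp0.
    split; apply/meqE.
    * by rewrite /qmat toM_conj !toM_mul.
    * by rewrite /pmat toM_conj !toM_sub !toM_mul.
Qed.
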